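(* Let $E=(E^0,E^1,r,s)$ be a graph with no cycles and no line points. Then for any vertex $v\in E^0$ and any infinite path $\alpha=f_1f_2\cdots$ in $E$ there exists a finite path $\mu=e_1\cdots e_n$ (with $n\ge1$) such that $s(e_1)=v$ and $e_n\neq f_i$ for all $i\in\mathbb{N}$.
   Context: A graph $E=(E^0,E^1,r,s)$ has vertex set $E^0$, edge set $E^1$, range and source maps. A finite path of positive length is $e_1\cdots e_n$ with $r(e_i)=s(e_{i+1})$; an infinite path is $f_1f_2\cdots$ with $r(f_i)=s(f_{i+1})$. A cycle is a finite path $e_1\cdots e_n$ ($n\ge1$) with $s(e_1)=r(e_n)$. For $v\in E^0$, $T(v)$ is the set of vertices $w$ such that there is a path from $v$ to $w$ (including $v$). A bifurcation vertex is one emitting at least two edges. $v$ is a line point if $T(v)$ contains no bifurcation vertex and no vertex of $T(v)$ lies on a cycle (in particular, every sink is a line point). *)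

(* Defs.v *)
(* A (directed) graph E = (E^0, E^1, r, s) is given by a vertex
   type V, an edge type Ed, and range/source maps r s : Ed -> V.  No finiteness
   or countability assumptions. *)
From Stdlib Require Import List.
Import ListNotations.
Set Implicit Arguments.

Section Graphs.
Variables (V Ed : Type) (r s : Ed -> V).

Fixpoint chain (e : Ed) (p : list Ed) : Prop :=
  match p with
  | nil => True
  | e' :: p' => r e = s e' /\ chain e' p'
  end.

(* A finite path of positive length is e :: p with [chain e p];
   its source is [s e] and its range is [r (last p e)]. *)

Definition is_cycle (e : Ed) (p : list Ed) : Prop :=
  chain e p /\ s e = r (last p e).

Definition acyclic : Prop := forall e p, ~ is_cycle e p.

(* Infinite path f_1 f_2 ... (indexed from 0). *)
Definition inf_path (f : nat -> Ed) : Prop := forall i, r (f i) = s (f (S i)).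

Definition in_T (v w : V) : Prop :=
  v = w \/ exists e p, chain e p /\ s e = v /\ r (last p e) = w.

Definition bifurcation (w : V) : Prop :=
  exists e1 e2, e1 <> e2 /\ s e1 = w /\ s e2 = w.

Definition on_cycle (w : V) : Prop :=
  exists e p, is_cycle e p /\ In w (map s (e :: p)).

Definition line_point (v : V) : Prop :=
  forall w, in_T v w -> ~ bifurcation w /\ ~ on_cycle w.

Definition no_line_points : Prop := forall v, ~ line_point v.

End Graphs.

(* Main.v *)
Require Import Defs.
From Stdlib Require Import List.
From Stdlib Require Import Classical Lia Arith PeanoNat.
Import ListNotations.

Lemma last_irr (Ed : Type) (p : list Ed) d d' : p <> [] -> last p d = last p d'.
Proof. induction p as [|a p IH]; intros H; [congruence|]. destruct p; simpl; auto.
  apply IH; discriminate. Qed.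

Lemma chain_app (V Ed : Type) (r s : Ed -> V) e p x :
  chain r s e p -> r (last p e) = s x -> chain r s e (p ++ [x]).
Proof.
  revert e; induction p as [|a p IH]; intros e H1 H2.
  - simpl in *; split; auto.
  - destruct H1 as [H1 H3]. simpl. split; auto.
    apply IH; auto. destruct p as [|b p]; [simpl in *; exact H2|]. rewrite (@last_irr _ (b::p) a e); [exact H2|discriminate].
Qed.

Lemma last_app1 (Ed : Type) (p : list Ed) e x : last (p ++ [x]) e = x.
Proof.
  revert e; induction p as [|a p IH]; intros e; simpl; auto.
  rewrite IH. destruct (p ++ [x]) eqn:E; auto. destruct p; discriminate.
Qed.

Lemma chain_f (V Ed : Type) (r s : Ed -> V) f :
  inf_path r s f -> forall k i, chain r s (f i) (map f (seq (S i) k)).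
Proof.
  intros Hf k; induction k as [|k IH]; intros i; simpl; auto.
  all: try (split; [apply Hf|apply IH]).
Qed.

Lemma last_cons' (Ed : Type) (a d : Ed) l : last (a :: l) d = last l a.
Proof. destruct l as [|b l]; [reflexivity|].
  change (last (b::l) d = last (b::l) a). apply last_irr; discriminate. Qed.

Lemma last_f (Ed : Type) (f : nat -> Ed) :
  forall k i, last (map f (seq (S i) k)) (f i) = f (i + k).
Proof.
  induction k as [|k IH]; intros i.
  - simpl. f_equal; lia.
  - change (last (f (S i) :: map f (seq (S (S i)) k)) (f i) = f (i + S k)).
    rewrite last_cons', IH. f_equal; lia.
Qed.

Theorem lemma4p6 (V Ed : Type) (r s : Ed -> V) :
  acyclic r s -> no_line_points r s ->
  forall (v : V) (f : nat -> Ed), inf_path r s f ->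
  exists (e : Ed) (p : list Ed),
    chain r s e p /\ s e = v /\ forall i : nat, last p e <> f i.
Proof.
  intros Hac Hnl v f Hf.
  assert (Hw : exists w, in_T r s v w /\ bifurcation s w).
  { apply NNPP; intro Hn. apply (Hnl v). intros w Hw. split.
    - intro Hb. apply Hn. eauto.
    - intros [e [p [Hc _]]]. exact (Hac e p Hc). }
  destruct Hw as [w [HT [e1 [e2 [Hne [Hs1 Hs2]]]]]].
  assert (Hgood : forall x, s x = w -> exists (e : Ed) (p : list Ed),
             chain r s e p /\ s e = v /\ last p e = x).
  { intros x Hx. destruct HT as [<- | [e [p [Hc [Hse Hr]]]]].
    - exists x, []. simpl; auto.
    - exists e, (p ++ [x]). split; [|split]; auto.
      + apply chain_app; congruence.
      + apply last_app1. }
  (* two distinct edges out of w cannot both be on f *)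
  assert (Hcyc : forall i j, i < j -> s (f i) = s (f j) -> False).
  { intros i j Hij Hsij.
    apply (Hac (f i) (map f (seq (S i) (j - S i)))). split.
    - apply chain_f; auto.
    - rewrite last_f. rewrite Hsij.
      replace j with (S (i + (j - S i))) at 1 by lia. symmetry. apply Hf. }
  destruct (classic (exists i, e1 = f i)) as [[i Hi]|H1].
  - destruct (classic (exists j, e2 = f j)) as [[j Hj]|H2].
    + exfalso. destruct (Nat.lt_trichotomy i j) as [H|[H|H]].
      * apply (Hcyc i j H). congruence.
      * subst. congruence.
      * apply (Hcyc j i H). congruence.
    + destruct (Hgood e2 Hs2) as [e [p [Hc [Hse Hl]]]].
      exists e, p. repeat split; auto. intros k Hk. apply H2. exists k. congruence.
  - destruct (Hgood e1 Hs1) as [e [p [Hc [Hse Hl]]]].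
    exists e, p. repeat split; auto. intros k Hk. apply H1. exists k. congruence.
Qed.
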